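(* Fix a set $\mathfrak{p}$ of points. (a) If $(\mathfrak{p},\mathfrak{L})$ is a linear space, then the cograph $\mathcal{C}$ on $\mathfrak{p}$ defined by letting $\mathcal{C}(P,Q)$ be the unique line of $\mathfrak{L}$ containing $P$ and $Q$ is a PL-cograph. (b) If $\mathcal{C}$ is a PL-cograph on $\mathfrak{p}$, then letting, for each pair of distinct points $P,Q$, the line through $P$ and $Q$ be the set of all endpoints of all pairs $\{R,S\}$ with $\mathcal{C}(R,S)=\mathcal{C}(P,Q)$, yields a well-defined linear space on $\mathfrak{p}$. (c) These two constructions are mutually inverse (PL-cographs being considered up to renaming of edge values), so linear spaces on $\mathfrak{p}$ and PL-cographs on $\mathfrak{p}$ are in one-to-one correspondence.
   Context: A cograph is a function $\mathcal{C}$ assigning to each unordered pair $\{P,Q\}$ of distinct elements of a set of points a value $\mathcal{C}(P,Q)$ (an edge). A PL-cograph is a cograph satisfying: (1) for distinct points $P,Q,R$, if $\mathcal{C}(P,Q)=\mathcal{C}(Q,R)$ then $\mathcal{C}(P,Q)=\mathcal{C}(P,R)$; (2) for distinct points $P,Q,R,S$, if $\mathcal{C}(P,Q)=\mathcal{C}(R,S)$ then $\mathcal{C}(P,Q)=\mathcal{C}(P,R)=\mathcal{C}(P,S)=\mathcal{C}(Q,R)=\mathcal{C}(Q,S)$. A linear space $(\mathfrak{p},\mathfrak{L})$ consists of a set $\mathfrak{p}$ of points and a set $\mathfrak{L}$ of lines, each line a subset of $\mathfrak{p}$, such that any two distinct points belong to exactly one line and every line has at least two points. *)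

(* Defs.v *)
From Stdlib Require Import ClassicalEpsilon.
Set Implicit Arguments.

Section Defs.
Variables (P E : Type).

(* A cograph on P with edge values in E: a value C x y for each unordered
   pair {x,y} of distinct points; represented by a function on ordered pairs
   that is symmetric on distinct points (values on the diagonal are irrelevant). *)
Definition is_cograph (C : P -> P -> E) : Prop :=
  forall x y, x <> y -> C x y = C y x.

Definition is_PL_cograph (C : P -> P -> E) : Prop :=
  is_cograph C /\
  (forall p q r, p <> q -> q <> r -> p <> r ->
     C p q = C q r -> C p q = C p r) /\
  (forall p q r s, p <> q -> p <> r -> p <> s -> q <> r -> q <> s -> r <> s ->
     C p q = C r s ->
     C p q = C p r /\ C p q = C p s /\ C p q = C q r /\ C p q = C q s).

Definition is_linear_space (L : (P -> Prop) -> Prop) : Prop :=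
  (forall x y, x <> y -> exists! l, L l /\ l x /\ l y) /\
  (forall l, L l -> exists x y, x <> y /\ l x /\ l y).
End Defs.

Definition line_cograph (P : Type) (L : (P -> Prop) -> Prop) (x y : P)
  : P -> Prop :=
  epsilon (inhabits (fun _ : P => False)) (fun l => L l /\ l x /\ l y).

Definition cograph_line (P E : Type) (C : P -> P -> E) (x y : P) : P -> Prop :=
  fun z => exists r s, r <> s /\ C r s = C x y /\ (z = r \/ z = s).

Definition cograph_lines (P E : Type) (C : P -> P -> E) : (P -> Prop) -> Prop :=
  fun l => exists x y, x <> y /\ l = cograph_line C x y.

(* Main.v *)
Require Import Defs.
From Stdlib Require Import Classical ClassicalEpsilon FunctionalExtensionality PropExtensionality.
Set Implicit Arguments.

Section Aux.
Variables (P E : Type).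

Lemma lc_spec (L : (P -> Prop) -> Prop) x y :
  is_linear_space L -> x <> y ->
  (L (line_cograph L x y) /\ line_cograph L x y x /\ line_cograph L x y y) /\
  (forall l, L l -> l x -> l y -> l = line_cograph L x y).
Proof.
  intros [H1 H2] Hxy.
  destruct (H1 x y Hxy) as [m [Hm Hu]].
  assert (Hs : L (line_cograph L x y) /\ line_cograph L x y x /\ line_cograph L x y y).
  { unfold line_cograph. apply epsilon_spec. exists m; exact Hm. }
  split; [exact Hs|].
  intros l Hl Hx Hy.
  transitivity m.
  - symmetry; apply Hu; auto.
  - apply Hu; exact Hs.
Qed.

Lemma clique (C : P -> P -> E) r s r' s' x y :
  is_PL_cograph C -> r <> s -> r' <> s' -> C r s = C r' s' ->
  (x = r \/ x = s) -> (y = r' \/ y = s') -> x <> y -> C x y = C r s.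
Proof.
  intros [Hsym [H1 H2]] Hrs Hrs' He Hx Hy Hxy.
  set (e := C r s) in *.
  assert (A : forall a b c, a <> b -> a <> c -> b <> c -> C a b = e -> C a c = e -> C b c = e).
  { intros a b c ab ac bc E1 E2.
    assert (Hba' : C b a = C a b) by (apply Hsym; auto).
    assert (Hba : C b a = C a c) by congruence.
    pose proof (H1 b a c (not_eq_sym ab) ac bc Hba). congruence. }
  assert (Main : forall a b c d, a <> b -> c <> d -> C a b = e -> C c d = e -> a <> c -> C a c = e).
  { intros a b c d ab cd E1 E2 ac.
    destruct (classic (b = c)) as [->|bc]; [exact E1|].
    destruct (classic (d = a)) as [->|da]; [rewrite Hsym by auto; exact E2|].
    destruct (classic (b = d)) as [->|bd].
    - apply (A d a c); auto. rewrite Hsym by auto; auto. rewrite Hsym by auto; auto.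
    - assert (C a b = C c d) by congruence.
      destruct (H2 a b c d ab ac (not_eq_sym da) bc bd cd H) as [? _]. congruence. }
  assert (Ers : C s r = e) by (unfold e; apply Hsym; auto).
  assert (Ers' : C r' s' = e) by (symmetry; exact He).
  assert (Esr' : C s' r' = e) by (rewrite Hsym by auto; exact Ers').
  destruct Hx as [->| ->]; destruct Hy as [->| ->].
  - eapply Main; eauto.
  - eapply Main; eauto.
  - eapply Main; eauto.
  - eapply Main; eauto.
Qed.

Lemma cl_contains (C : P -> P -> E) x y : x <> y ->
  cograph_line C x y x /\ cograph_line C x y y.
Proof. intros; split; exists x, y; auto. Qed.

Lemma cl_eq (C : P -> P -> E) x y u v :
  is_PL_cograph C -> x <> y -> u <> v ->
  cograph_line C u v x -> cograph_line C u v y -> C x y = C u v.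
Proof.
  intros HC Hxy Huv [r [s [Hrs [E1 Hx]]]] [r' [s' [Hrs' [E2 Hy]]]].
  rewrite <- E1. eapply clique; eauto. congruence.
Qed.

Lemma part_b (C : P -> P -> E) : is_PL_cograph C -> is_linear_space (cograph_lines C).
Proof.
  intros HC. split.
  - intros x y Hxy. exists (cograph_line C x y). split.
    + split; [exists x, y; auto|]. apply cl_contains; auto.
    + intros l [[u [v [Huv ->]]] [Hx Hy]].
      unfold cograph_line. rewrite (cl_eq HC Hxy Huv Hx Hy). reflexivity.
  - intros l [x [y [Hxy ->]]]. exists x, y. split; auto. apply cl_contains; auto.
Qed.

Lemma cl_lc (L : (P -> Prop) -> Prop) x y : is_linear_space L -> x <> y ->
  cograph_line (line_cograph L) x y = line_cograph L x y.
Proof.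
  intros HL Hxy.
  destruct (lc_spec HL Hxy) as [[Hm [Hmx Hmy]] Hu].
  apply functional_extensionality; intro z; apply propositional_extensionality; split.
  - intros [r [s [Hrs [E1 Hz]]]].
    destruct (lc_spec HL Hrs) as [[_ [Hr Hs]] _].
    rewrite E1 in Hr, Hs. destruct Hz as [-> | ->]; auto.
  - intro Hz. destruct (classic (z = x)) as [->|zx].
    + exists x, y; auto.
    + exists z, x. split; [auto|]. split; [|auto].
      symmetry. destruct (lc_spec HL zx) as [[Hm' [? ?]] Hu'].
      apply Hu'; auto.
Qed.

End Aux.

Theorem theorem5p2 (P : Type) :
  (* (a) *)
  (forall L : (P -> Prop) -> Prop,
     is_linear_space L -> is_PL_cograph (line_cograph L)) /\
  (* (b) *)
  (forall (E : Type) (C : P -> P -> E),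
     is_PL_cograph C -> is_linear_space (cograph_lines C)) /\
  (* (c) linear space -> cograph -> linear space gives back L *)
  (forall L : (P -> Prop) -> Prop,
     is_linear_space L ->
     forall l, cograph_lines (line_cograph L) l <-> L l) /\
  (* (c) PL-cograph -> linear space -> cograph gives back C up to a renaming
     of edge values (a bijection between the sets of edge values used) *)
  (forall (E : Type) (C : P -> P -> E),
     is_PL_cograph C ->
     exists f : E -> (P -> Prop),
       (forall x y, x <> y -> line_cograph (cograph_lines C) x y = f (C x y)) /\
       (forall x y u v, x <> y -> u <> v ->
          f (C x y) = f (C u v) -> C x y = C u v)).
Proof.
  split; [|split; [|split]].
  - intros L HL. split; [|split].
    + intros x y Hxy.
      destruct (lc_spec HL Hxy) as [[Hm [Hx Hy]] _].
      destruct (lc_spec HL (not_eq_sym Hxy)) as [_ Hu]. apply Hu; auto.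
    + intros p q r pq qr pr E1.
      destruct (lc_spec HL pq) as [[Hm [Hp Hq]] _].
      destruct (lc_spec HL qr) as [[Hm' [Hq' Hr']] _].
      destruct (lc_spec HL pr) as [_ Hu].
      apply Hu; auto. rewrite E1; auto.
    + intros p q r s pq pr ps qr qs rs E1.
      destruct (lc_spec HL pq) as [[Hm [Hp Hq]] _].
      destruct (lc_spec HL rs) as [[_ [Hr Hs]] _].
      rewrite <- E1 in Hr, Hs.
      repeat split.
      * destruct (lc_spec HL pr) as [_ Hu]; apply Hu; auto.
      * destruct (lc_spec HL ps) as [_ Hu]; apply Hu; auto.
      * destruct (lc_spec HL qr) as [_ Hu]; apply Hu; auto.
      * destruct (lc_spec HL qs) as [_ Hu]; apply Hu; auto.
  - intros E C HC. apply part_b; auto.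
  - intros L HL l. split.
    + intros [x [y [Hxy ->]]]. rewrite cl_lc by auto.
      apply (lc_spec HL Hxy).
    + intros Hl. destruct HL as [H1 H2] eqn:HLe.
      destruct (H2 l Hl) as [x [y [Hxy [Hx Hy]]]].
      exists x, y. split; auto. rewrite cl_lc by auto.
      apply (lc_spec HL Hxy); auto.
  - intros E C HC.
    exists (fun e z => exists r s, r <> s /\ C r s = e /\ (z = r \/ z = s)).
    split.
    + intros x y Hxy.
      pose proof (part_b HC) as HL.
      destruct (lc_spec HL Hxy) as [_ Hu].
      symmetry. apply Hu.
      * exists x, y; auto.
      * exists x, y; auto.
      * exists x, y; auto.
    + intros x y u v Hxy Huv Hf.
      assert (Hx : cograph_line C x y x /\ cograph_line C x y y) by (apply cl_contains; auto).
      destruct Hx as [Hx Hy].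
      pose proof (equal_f Hf x) as Fx. pose proof (equal_f Hf y) as Fy.
      cbv beta in Fx, Fy. unfold cograph_line in Hx, Hy |- *.
      rewrite Fx in Hx. rewrite Fy in Hy.
      exact (cl_eq HC Hxy Huv Hx Hy).
Qed.
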